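(* Let $G=(V,E)$ be a connected undirected graph with $V=\{1,\dots,n\}$, $E=\{1,\dots,m\}$, labeled nodes $1,\dots,n_l$ (with $1\le n_l<n$), and edge dissimilarities $d_e>0$. Set $\lambda=0$. Then for every unlabeled node $p\in\{n_l+1,\dots,n\}$ and every vector of labels $\vec f_l=(f(1),\dots,f(n_l))^{\top}$, the flow-based prediction $f(p)=\vec w(p)^{\top}\vec f_l$ coincides with the Harmonic Functions prediction at $p$, i.e. with the $p$-th entry of $\vec f_u=-L_{uu}^{-1}L_{ul}\vec f_l$, where $L=AD^{-1}A^{\top}$, $D=\mathrm{diag}(d_1,\dots,d_m)$, and $L_{uu}$, $L_{ul}$ are the blocks of $L$ with rows indexed by unlabeled nodes and columns indexed by unlabeled, resp. labeled, nodes. (Equivalently, $\vec f_u$ is the minimizer of $\sum_{(i,j)\in E}-L_{ij}(f_i-f_j)^2$ over $\vec f\in\mathbb R^n$ subject to $f_i=f(i)$ for $i\le n_l$.)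
   Context: Orient each edge of $G$ arbitrarily and let $A$ be the $n\times m$ signed incidence matrix: for edge $e$ oriented from $i$ to $j$, $A_{ie}=+1$, $A_{je}=-1$, other entries of column $e$ zero. Let $A_l$ be the submatrix of rows $1,\dots,n_l$ and $A_u$ the submatrix of the remaining rows. For an unlabeled node $p$, let $\vec b_p\in\mathbb R^{n-n_l}$ be the vector (indexed by unlabeled nodes) that is $0$ everywhere except $-1$ at the entry of $p$. For $\lambda\ge0$, the flow $\vec x\in\mathbb R^m$ is the unique minimizer of $\frac12\sum_{e=1}^m d_e(x_e^2+\lambda|x_e|)$ subject to $A_u\vec x=\vec b_p$, and the prediction weights are $\vec w(p)=A_l\vec x\in\mathbb R^{n_l}$; the flow-based prediction is $f(p)=\sum_{i=1}^{n_l}w_i(p)f(i)$. *)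

(* Defs.v *)
From HB Require Import structures.
From mathcomp Require Import all_boot all_order all_algebra.
Set Implicit Arguments. Unset Strict Implicit. Unset Printing Implicit Defensive.
Import Order.TTheory GRing.Theory Num.Theory.
Local Open Scope ring_scope.

(* An oriented graph on nodes 'I_n with edges 'I_m: edge e goes src e -> tgt e. *)

Definition adj (n m : nat) (src tgt : 'I_m -> 'I_n) : rel 'I_n :=
  fun i j => [exists e : 'I_m, ((src e == i) && (tgt e == j))
                            || ((src e == j) && (tgt e == i))].

Definition simple_graph (n m : nat) (src tgt : 'I_m -> 'I_n) : Prop :=
  (forall e, src e != tgt e) /\
  (forall e e', ((src e == src e') && (tgt e == tgt e'))
                || ((src e == tgt e') && (tgt e == src e')) -> e = e').

Definition connected_graph (n m : nat) (src tgt : 'I_m -> 'I_n) : Prop :=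
  forall i j : 'I_n, connect (adj src tgt) i j.

Definition incidence (R : pzRingType) (n m : nat) (src tgt : 'I_m -> 'I_n)
  : 'M[R]_(n, m) :=
  \matrix_(i, e) (if i == src e then 1 else if i == tgt e then -1 else 0).

Definition bvec (R : pzRingType) (nu : nat) (p : 'I_nu) : 'cV[R]_nu :=
  \col_j (if j == p then -1 else 0).

Definition flow_obj (R : realFieldType) (m : nat) (d : 'I_m -> R) (lambda : R)
  (x : 'cV[R]_m) : R :=
  2^-1 * \sum_(e < m) d e * (x e 0 ^+ 2 + lambda * `|x e 0|).

(* x is a minimizer of the objective subject to A_u x = b_p, where nodes are
   'I_(nl + nu): the first nl are labeled, the last nu unlabeled. *)
Definition is_flow (R : realFieldType) (nl nu m : nat) (src tgt : 'I_m -> 'I_(nl + nu))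
  (d : 'I_m -> R) (lambda : R) (p : 'I_nu) (x : 'cV[R]_m) : Prop :=
  let A := incidence R src tgt in
  dsubmx A *m x = bvec R p /\
  forall y : 'cV[R]_m, dsubmx A *m y = bvec R p ->
    flow_obj d lambda x <= flow_obj d lambda y.

Definition flow_pred (R : realFieldType) (nl nu m : nat) (src tgt : 'I_m -> 'I_(nl + nu))
  (x : 'cV[R]_m) (fl : 'cV[R]_nl) : R :=
  let w := usubmx (incidence R src tgt) *m x in
  \sum_(i < nl) w i 0 * fl i 0.

Definition laplacian (R : realFieldType) (n m : nat) (src tgt : 'I_m -> 'I_n)
  (d : 'I_m -> R) : 'M[R]_n :=
  let A := incidence R src tgt in
  A *m invmx (diag_mx (\row_e d e)) *m A^T.

Definition harmonic_pred (R : realFieldType) (nl nu m : nat) (src tgt : 'I_m -> 'I_(nl + nu))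
  (d : 'I_m -> R) (fl : 'cV[R]_nl) : 'cV[R]_nu :=
  let L := laplacian src tgt d in
  - (invmx (drsubmx L) *m dlsubmx L *m fl).

(* Main.v *)
Require Import Defs.
From HB Require Import structures.
From mathcomp Require Import all_boot all_order all_algebra.
From mathcomp Require Import ring.
Import Order.TTheory GRing.Theory Num.Theory.
Local Open Scope ring_scope.

Lemma sum_inc (R : pzRingType) n (f : 'I_n -> R) (s t : 'I_n) : s != t ->
  \sum_i f i * (if i == s then 1 else if i == t then -1 else 0) = f s - f t.
Proof.
move=> st.
rewrite (bigD1 s) //= eqxx mulr1 (bigD1 t) 1?eq_sym //= (negbTE st) eqxx.
rewrite big1 ?addr0 ?mulrN1 // => i /andP[Hs Ht].
by rewrite (negbTE Hs) (negbTE Ht) mulr0.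
Qed.

Lemma bvecE (R : pzRingType) k (p : 'I_k) (v : 'cV[R]_k) :
  ((bvec R p)^T *m v) 0 0 = - v p 0.
Proof.
rewrite !mxE (bigD1 p) //= !mxE eqxx mulN1r big1 ?addr0 // => i Hi.
by rewrite !mxE (negbTE Hi) mul0r.
Qed.

Lemma trE (R : comPzRingType) k (X h : 'cV[R]_k) :
  (X^T *m h) 0 0 = \sum_e X e 0 * h e 0.
Proof. by rewrite mxE; apply: eq_bigr => e _; rewrite mxE. Qed.

Section S.
Variables (R : realFieldType) (nl nu m : nat)
  (src tgt : 'I_m -> 'I_(nl + nu)) (d : 'I_m -> R).
Hypothesis hd : forall e, 0 < d e.

Let A := incidence R src tgt.
Let Al := usubmx A.
Let Au := dsubmx A.
Let Di := diag_mx (\row_e (d e)^-1).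

Lemma invD : invmx (diag_mx (\row_e d e)) = Di.
Proof.
have H : diag_mx (\row_e d e) *m Di = 1%:M.
  apply/matrixP => i j; rewrite mul_mx_diag !mxE.
  case: eqVneq => [->|_]; last by rewrite mulr0n mul0r.
  by rewrite mulr1n mulfV // gt_eqF.
have [U _] := mulmx1_unit H.
by rewrite -[invmx _]mulmx1 -H mulmxA mulVmx // mul1mx.
Qed.

Lemma lapE : laplacian src tgt d = col_mx Al Au *m Di *m row_mx Al^T Au^T.
Proof. by rewrite /laplacian invD -tr_col_mx vsubmxK. Qed.

Lemma LdrE : drsubmx (laplacian src tgt d) = Au *m Di *m Au^T.
Proof.
by rewrite lapE /drsubmx mul_col_mx mul_col_mx col_mxKd mul_mx_row row_mxKr.
Qed.

Lemma LdlE : dlsubmx (laplacian src tgt d) = Au *m Di *m Al^T.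
Proof.
by rewrite lapE /dlsubmx mul_col_mx mul_col_mx col_mxKd mul_mx_row row_mxKl.
Qed.

Lemma M_unit : (0 < nl)%N -> simple_graph src tgt -> connected_graph src tgt ->
  (Au *m Di *m Au^T) \in unitmx.
Proof.
move=> hnl [hs _] hc.
rewrite unitmxE unitfE; apply/negP => /det0P [v vn0 vM].
pose w := v *m Au.
have H0 : \sum_e w 0 e * (d e)^-1 * w 0 e = 0.
  have : (v *m (Au *m Di *m Au^T) *m v^T) 0 0 = 0 by rewrite vM mul0mx mxE.
  rewrite !mulmxA -mulmxA -trmx_mul mxE => H; apply: etrans H.
  by apply: eq_bigr => e _; rewrite mul_mx_diag !mxE.
have hw : forall e, w 0 e = 0.
  move=> e.
  have hge : forall i, true -> 0 <= w 0 i * (d i)^-1 * w 0 i.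
    by move=> i _; rewrite mulrAC -expr2 mulr_ge0 ?sqr_ge0 // invr_ge0 ltW.
  have := psumr_eq0P hge H0 (i := e) isT.
  move/eqP; rewrite mulrAC -expr2 mulf_eq0 invr_eq0 (gt_eqF (hd e)) orbF sqrf_eq0.
  by move/eqP.
pose nu_ := row_mx (0 : 'rV[R]_nl) v.
have hnA : nu_ *m A = w.
  by rewrite /nu_ -(vsubmxK A) mul_row_col mul0mx add0r.
have he : forall e, nu_ 0 (src e) = nu_ 0 (tgt e).
  move=> e; apply/eqP; rewrite -subr_eq0; apply/eqP.
  rewrite -(@sum_inc _ _ (fun i => nu_ 0 i) _ _ (hs e)).
  apply: (etrans _ (hw e)); rewrite -hnA mxE.
  by apply: eq_bigr => i _; congr (_ * _); rewrite /A /incidence mxE.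
have hadj : forall i j, adj src tgt i j -> nu_ 0 i = nu_ 0 j.
  by move=> i j /existsP [e /orP [] /andP [/eqP <- /eqP <-]]; rewrite he.
have hcon : forall i j, nu_ 0 i = nu_ 0 j.
  move=> i j; have /connectP [s pth ->] := hc i j.
  elim: s i pth => //= a s IH i /andP [hij hp].
  by rewrite (hadj _ _ hij) IH.
apply/negP: vn0; rewrite negbK; apply/eqP/matrixP => i k.
rewrite (ord1 i) mxE.
have := hcon (lshift nu (Ordinal hnl)) (rshift nl k).
by rewrite /nu_ row_mxEl row_mxEr mxE.
Qed.


Lemma main_sec : (0 < nl)%N -> simple_graph src tgt -> connected_graph src tgt ->
  forall (p : 'I_nu) (fl : 'cV[R]_nl),
    (exists x : 'cV[R]_m, is_flow src tgt d 0 p x) /\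
    (forall x : 'cV[R]_m, is_flow src tgt d 0 p x ->
       flow_pred src tgt x fl = harmonic_pred src tgt d fl p 0).
Proof.
move=> hnl hsim hcon p fl.
have hU := M_unit hnl hsim hcon.
set M := Au *m Di *m Au^T in hU.
pose mu := invmx M *m bvec R p.
pose xs := Di *m Au^T *m mu.
have hxs : Au *m xs = bvec R p.
  by rewrite /xs /mu !mulmxA -/M mulmxV // mul1mx.
have hxe : forall e, xs e 0 = (d e)^-1 * (Au^T *m mu) e 0.
  by move=> e; rewrite /xs -mulmxA mul_diag_mx mxE [X in X * _]mxE.
have horth : forall h : 'cV_m, Au *m h = 0 -> \sum_e d e * xs e 0 * h e 0 = 0.
  move=> h hh; transitivity (((Au^T *m mu)^T *m h) 0 0).
    rewrite trE; apply: eq_bigr => e _.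
    by rewrite hxe mulrA mulfV ?gt_eqF // mul1r.
  by rewrite trmx_mul trmxK -mulmxA hh mulmx0 mxE.
have hobj : forall y, flow_obj d 0 y = 2^-1 * \sum_e d e * y e 0 ^+ 2.
  by move=> y; rewrite /flow_obj; congr (_ * _); apply: eq_bigr => e _; rewrite mul0r addr0.
have hdiff : forall y, Au *m y = bvec R p ->
    flow_obj d 0 y - flow_obj d 0 xs = 2^-1 * \sum_e d e * (y e 0 - xs e 0) ^+ 2.
  move=> y hy; rewrite !hobj -mulrBr -sumrB; congr (_ * _).
  have hh : Au *m (y - xs) = 0 by rewrite mulmxBr hy hxs subrr.
  have E : \sum_e (d e * y e 0 ^+ 2 - d e * xs e 0 ^+ 2) =
     \sum_e (d e * (y e 0 - xs e 0) ^+ 2 + 2 * (d e * xs e 0 * (y - xs) e 0)).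
    by apply: eq_bigr => e _; rewrite !mxE; ring.
  by rewrite E big_split /= -mulr_sumr (horth _ hh) mulr0 addr0.
have hge : forall y : 'cV_m, 0 <= \sum_e d e * (y e 0 - xs e 0) ^+ 2.
  by move=> y; apply: sumr_ge0 => e _; rewrite mulr_ge0 ?sqr_ge0 // ltW.
have hflow : is_flow src tgt d 0 p xs.
  split; first exact: hxs.
  move=> y hy; rewrite -subr_ge0 hdiff // mulr_ge0 //.
  by rewrite invr_ge0 ler0n.
have huniq : forall x, is_flow src tgt d 0 p x -> x = xs.
  move=> x [hx hmin].
  have := hmin xs hxs; rewrite -subr_le0 hdiff // pmulr_rle0 ?invr_gt0 ?ltr0n // => hle.
  have hs : \sum_e d e * (x e 0 - xs e 0) ^+ 2 = 0.
    by apply/eqP; rewrite eq_le hle hge.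
  apply/matrixP => e j; rewrite (ord1 j).
  have hg : forall i, true -> 0 <= d i * (x i 0 - xs i 0) ^+ 2.
    by move=> i _; rewrite mulr_ge0 ?sqr_ge0 // ltW.
  have := psumr_eq0P hg hs (i := e) isT.
  move/eqP; rewrite mulf_eq0 (gt_eqF (hd e)) /= sqrf_eq0 subr_eq0.
  by move/eqP.
split; first by exists xs.
move=> x /huniq ->.
rewrite /flow_pred /harmonic_pred /= -/A -/Al LdrE LdlE -/M.
have hMt : M^T = M by rewrite /M !trmx_mul trmxK tr_diag_mx mulmxA.
have hxsT : (Al *m xs)^T = (bvec R p)^T *m (invmx M *m (Au *m Di *m Al^T)).
  rewrite /xs /mu !trmx_mul trmx_inv hMt trmxK tr_diag_mx !mulmxA //.
rewrite [RHS]mxE -bvecE (mulmxA (bvec R p)^T) -hxsT trE.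
by apply: eq_bigr => i _; rewrite !mxE.
Qed.

End S.

Theorem proposition1 (R : realFieldType) (nl nu m : nat)
  (src tgt : 'I_m -> 'I_(nl + nu)) (d : 'I_m -> R) :
  (0 < nl)%N -> (0 < nu)%N ->
  simple_graph src tgt -> connected_graph src tgt ->
  (forall e, 0 < d e) ->
  forall (p : 'I_nu) (fl : 'cV[R]_nl),
    (exists x : 'cV[R]_m, is_flow src tgt d 0 p x) /\
    (forall x : 'cV[R]_m, is_flow src tgt d 0 p x ->
       flow_pred src tgt x fl = harmonic_pred src tgt d fl p 0).
Proof.
move=> hnl _ hsim hcon hd; exact: main_sec.
Qed.
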